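(* Let $a\in(-\infty,1)$ and $\omega\in\mathbb D_a$. Then for every $x>0$, $$\frac{\eta_a}{\pi}\le r(\omega)\le\min\left\{\frac{2(x+1)}{\pi x}(1-\omega(x))^{1/2},\ \frac2\pi\right\}.$$
   Context: Let $\rho(x)=(1+|x|)^{-1/2}$ and $\eta_a=\frac{1}{2^{9/2}(4+|a|)^3}$. $\mathbb D_a$ is the set of continuous even functions $\omega$ on $\mathbb R$ with $\|\rho\omega\|_{L^\infty}<\infty$ such that $\omega(0)=1$; $(1-x^2)_+\le\omega(x)\le1$ for all $x$; $\omega$ is non-increasing on $[0,\infty)$; $s\mapsto\omega(\sqrt s)$ is convex on $[0,\infty)$; and the left derivative satisfies $\omega'_-(1/2)\le-\eta_a$. $r(\omega)=\frac1\pi\int_0^\infty\frac{\omega(0)-\omega(y)}{y^2}\,dy$. *)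

(* Defs.v *)
From Stdlib Require Import Reals Lra.
From Coquelicot Require Import Coquelicot.
Open Scope R_scope.

Definition rho (x : R) : R := / sqrt (1 + Rabs x).

Definition eta (a : R) : R := / (Rpower 2 (9/2) * (4 + Rabs a) ^ 3).

Definition in_D (a : R) (w : R -> R) : Prop :=
  (forall x, continuity_pt w x) /\
  (forall x, w (- x) = w x) /\
  (exists M, forall x, Rabs (rho x * w x) <= M) /\
  w 0 = 1 /\
  (forall x, Rmax 0 (1 - x ^ 2) <= w x /\ w x <= 1) /\
  (forall x y, 0 <= x -> x <= y -> w y <= w x) /\
  (forall s t l, 0 <= s -> 0 <= t -> 0 <= l <= 1 ->
     w (sqrt (l * s + (1 - l) * t)) <= l * w (sqrt s) + (1 - l) * w (sqrt t)) /\
  (exists L, filterlim (fun h => (w (/2) - w (/2 - h)) / h) (at_right 0) (locally L)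
             /\ L <= - eta a).

Definition r (w : R -> R) : R :=
  / PI * RInt_gen (fun y => (w 0 - w y) / y ^ 2) (at_point 0) (Rbar_locally p_infty).

(* Main.v *)
Require Import Defs.
From Stdlib Require Import Reals Lra.
From Coquelicot Require Import Coquelicot.
Open Scope R_scope.
Definition fI (w : R -> R) (y : R) : R := (w 0 - w y) / y ^ 2.
Lemma f_nonincr (w : R -> R)
  (Hcvx : forall s t l, 0 <= s -> 0 <= t -> 0 <= l <= 1 ->
     w (sqrt (l * s + (1 - l) * t)) <= l * w (sqrt s) + (1 - l) * w (sqrt t))
  (H0 : w 0 = 1) :
  forall y1 y2, 0 < y1 -> y1 <= y2 -> fI w y2 <= fI w y1.
Proof.
  intros y1 y2 h1 h2. unfold fI.
  assert (hy2 : 0 < y2) by lra.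
  set (l := y1 ^ 2 / y2 ^ 2).
  assert (hl : 0 <= l <= 1).
  { unfold l; split.
    - apply Rmult_le_pos; [nra | left; apply Rinv_0_lt_compat; nra].
    - apply Rmult_le_reg_r with (y2 ^ 2); [nra|].
      field_simplify; [nra | lra]. }
  pose proof (Hcvx (y2 ^ 2) 0 l ltac:(nra) ltac:(lra) hl) as H.
  replace (l * y2 ^ 2 + (1 - l) * 0) with (y1 ^ 2) in H by (unfold l; field; lra).
  rewrite !sqrt_pow2 in H by lra. rewrite sqrt_0, H0 in H. rewrite H0.
  assert (E : (1 - w y1) / y1 ^ 2 - (1 - w y2) / y2 ^ 2 =
              ((1 - w y1) - l * (1 - w y2)) / y1 ^ 2) by (unfold l; field; lra).
  assert (0 <= ((1 - w y1) - l * (1 - w y2)) / y1 ^ 2).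
  { apply Rmult_le_pos; [lra | left; apply Rinv_0_lt_compat; nra]. }
  lra.
Qed.

Lemma f_bounds (w : R -> R)
  (Hb : forall x, Rmax 0 (1 - x ^ 2) <= w x /\ w x <= 1) (H0 : w 0 = 1) :
  forall y, 0 < y -> 0 <= fI w y /\ fI w y <= 1 /\ fI w y <= / y ^ 2.
Proof.
  intros y hy. unfold fI. rewrite H0.
  destruct (Hb y) as [h1 h2].
  assert (h3 : 1 - y ^ 2 <= w y) by (eapply Rle_trans; [apply Rmax_r | exact h1]).
  assert (h4 : 0 <= w y) by (eapply Rle_trans; [apply Rmax_l | exact h1]).
  assert (hp : 0 < y ^ 2) by nra.
  repeat split.
  - apply Rmult_le_pos; [lra | left; apply Rinv_0_lt_compat; lra].
  - apply Rmult_le_reg_r with (y ^ 2); [lra|]. unfold Rdiv.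
    rewrite Rmult_assoc, Rinv_l by lra. lra.
  - apply Rmult_le_reg_r with (y ^ 2); [lra|]. unfold Rdiv.
    rewrite Rmult_assoc, !Rinv_l by lra. lra.
Qed.

Lemma f_cont (w : R -> R) (Hc : forall x, continuity_pt w x) :
  forall y, 0 < y -> continuous (fI w) y.
Proof.
  intros y hy. apply continuity_pt_filterlim. unfold fI.
  apply continuity_pt_div.
  - apply continuity_pt_minus; [apply continuity_pt_const; intros ? ?; reflexivity | apply Hc].
  - apply derivable_continuous_pt. apply derivable_pt_pow.
  - apply pow_nonzero; lra.
Qed.
Lemma eta_half (a : R) (w : R -> R)
  (Hcvx : forall s t l, 0 <= s -> 0 <= t -> 0 <= l <= 1 ->
     w (sqrt (l * s + (1 - l) * t)) <= l * w (sqrt s) + (1 - l) * w (sqrt t))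
  (H0 : w 0 = 1)
  (Hb : forall x, Rmax 0 (1 - x ^ 2) <= w x /\ w x <= 1)
  (Hd : exists L, filterlim (fun h => (w (/2) - w (/2 - h)) / h) (at_right 0) (locally L)
             /\ L <= - eta a) :
  eta a <= fI w (/2).
Proof.
  destruct Hd as [L [HL HLe]].
  set (c := 4 * (w (/2) - 1)).
  assert (hw2 : w (/2) <= 1) by apply Hb.
  assert (Hq : at_right 0 (fun h => c <= (w (/2) - w (/2 - h)) / h)).
  { exists (mkposreal (/2) ltac:(lra)). intros h hb hpos. simpl in hb.
    unfold ball in hb; simpl in hb; unfold AbsRing_ball, abs, minus, plus, opp in hb; simpl in hb.
    assert (hh : h < /2).
    { rewrite Ropp_0, Rplus_0_r in hb. pose proof (Rle_abs h). lra. }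
    set (l := (1 - 2 * h) ^ 2).
    assert (hl : 0 <= l <= 1) by (unfold l; split; nra).
    pose proof (Hcvx (/4) 0 l ltac:(lra) ltac:(lra) hl) as H.
    replace (l * / 4 + (1 - l) * 0) with ((/2 - h) ^ 2) in H by (unfold l; field).
    replace (/4) with ((/2) ^ 2) in H by field.
    rewrite !sqrt_pow2 in H by lra. rewrite sqrt_0, H0 in H.
    apply Rmult_le_reg_r with h; [lra|]. unfold Rdiv. rewrite Rmult_assoc, Rinv_l by lra.
    unfold c, l in *. nra. }
  pose proof (filterlim_le (F := at_right 0) (fun _ => c) _ c L Hq
              (filterlim_const c) HL) as HcL.
  simpl in HcL. unfold fI. rewrite H0.
  replace ((1 - w (/2)) / (/2) ^ 2) with (- c) by (unfold c; field). lra.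
Qed.
Lemma ballR (x e y : R) : ball x e y <-> Rabs (y - x) < e.
Proof. unfold ball; simpl; unfold AbsRing_ball, abs, minus, plus, opp; simpl. tauto. Qed.

Lemma ex_RInt_f (w : R -> R)
  (Hnon : forall y1 y2, 0 < y1 -> y1 <= y2 -> fI w y2 <= fI w y1)
  (Hbd : forall y, 0 < y -> 0 <= fI w y /\ fI w y <= 1)
  (Hcont : forall y, 0 < y -> continuous (fI w) y) :
  forall b, 0 <= b -> ex_RInt (fI w) 0 b.
Proof.
  intros b hb.
  set (E := fun v => exists y, 0 < y /\ v = fI w y).
  assert (bE : bound E).
  { exists 1. intros v [y [hy ->]]. apply Hbd; lra. }
  assert (nE : exists v, E v) by (exists (fI w 1); exists 1; split; [lra|reflexivity]).
  destruct (completeness E bE nE) as [L0 [HL1 HL2]].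
  set (G := fun y => if Rle_dec y 0 then L0 else fI w y).
  assert (HG : ex_RInt G 0 b).
  { apply (ex_RInt_continuous (V := R_CompleteNormedModule)). intros z hz.
    rewrite Rmin_left, Rmax_right in hz by lra.
    destruct (Rle_lt_or_eq_dec 0 z (proj1 hz)) as [hz0|hz0].
    - apply continuous_ext_loc with (fI w); [|apply Hcont; lra].
      exists (mkposreal z hz0). intros y hy. pose proof (proj1 (ballR _ _ _) hy) as hy2; simpl in hy2.
      unfold G. destruct (Rle_dec y 0) as [h|h]; [|reflexivity].
      pose proof (Rle_abs (z - y)) as HH. rewrite Rabs_minus_sym in HH. exfalso. lra.
    - subst z. unfold continuous. apply filterlim_locally. intros eps.
      assert (Hex : exists y0, 0 < y0 /\ L0 - eps < fI w y0).
      { apply Classical_Prop.NNPP. intros Hn.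
        assert (Hub : is_upper_bound E (L0 - eps)).
        { intros v [y [hy ->]]. apply Rnot_lt_le. intros Hc. apply Hn. exists y. split; lra. }
        pose proof (HL2 _ Hub). pose proof (cond_pos eps). lra. }
      destruct Hex as [y0 [hy0 Hy0]].
      exists (mkposreal y0 hy0). intros y hy. pose proof (proj1 (ballR _ _ _) hy) as hy2; simpl in hy2.
      apply (proj2 (ballR _ _ _)). unfold G. destruct (Rle_dec 0 0) as [_|h]; [|lra].
      destruct (Rle_dec y 0) as [h|h].
      + rewrite Rminus_eq_0, Rabs_R0. apply cond_pos.
      + assert (hy' : y < y0) by (rewrite Rminus_0_r in hy2; pose proof (Rle_abs y); lra).
        pose proof (Hnon y y0 ltac:(lra) ltac:(lra)).
        assert (fI w y <= L0) by (apply HL1; exists y; split; [lra|reflexivity]).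
        rewrite Rabs_left1 by lra. lra. }
  apply ex_RInt_ext with G; [|exact HG].
  intros y hy. rewrite Rmin_left, Rmax_right in hy by lra.
  unfold G. destruct (Rle_dec y 0); [lra|reflexivity].
Qed.
Lemma RInt_mono (f : R -> R) (Hpos : forall y, 0 < y -> 0 <= f y)
  (Hex : forall b, 0 <= b -> ex_RInt f 0 b) :
  forall b1 b2, 0 <= b1 -> b1 <= b2 -> RInt f 0 b1 <= RInt f 0 b2.
Proof.
  intros b1 b2 h1 h2.
  assert (e2 : ex_RInt f b1 b2) by (apply (ex_RInt_Chasles_2 (V:=R_CompleteNormedModule)) with 0; [lra | apply Hex; lra]).
  rewrite <- (RInt_Chasles (V:=R_CompleteNormedModule) f 0 b1 b2) by first [exact e2 | apply Hex; lra].
  pose proof (RInt_ge_0 f b1 b2 h2 e2 ltac:(intros; apply Hpos; lra)).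
  change (plus (RInt f 0 b1) (RInt f b1 b2)) with (RInt f 0 b1 + RInt f b1 b2). lra.
Qed.

Lemma improper (f : R -> R) (Hpos : forall y, 0 < y -> 0 <= f y)
  (Hex : forall b, 0 <= b -> ex_RInt f 0 b) (M : R)
  (Hbnd : forall b, 0 <= b -> RInt f 0 b <= M) :
  exists l, is_RInt_gen f (at_point 0) (Rbar_locally p_infty) l /\
    (forall b, 0 <= b -> RInt f 0 b <= l) /\
    (forall B b0, 0 <= b0 -> (forall b, b0 <= b -> RInt f 0 b <= B) -> l <= B).
Proof.
  set (E := fun v => exists b, 0 <= b /\ v = RInt f 0 b).
  assert (bE : bound E) by (exists M; intros v [b [hb ->]]; apply Hbnd; lra).
  assert (nE : exists v, E v) by (exists (RInt f 0 0); exists 0; split; [lra|reflexivity]).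
  destruct (completeness E bE nE) as [l [HL1 HL2]].
  assert (Hle : forall b, 0 <= b -> RInt f 0 b <= l).
  { intros b hb. apply HL1. exists b. split; [lra|reflexivity]. }
  exists l. split; [|split; [exact Hle|]].
  - intros P [eps HP]. simpl.
    assert (Hx : exists b0, 0 <= b0 /\ l - eps < RInt f 0 b0).
    { apply Classical_Prop.NNPP. intros Hn.
      assert (Hub : is_upper_bound E (l - eps)).
      { intros v [y [hy ->]]. apply Rnot_lt_le. intros Hc. apply Hn. exists y. split; lra. }
      pose proof (HL2 _ Hub). pose proof (cond_pos eps). lra. }
    destruct Hx as [b0 [hb0 Hb0]].
    apply Filter_prod with (fun x => x = 0) (fun y => b0 < y).
    + reflexivity.
    + exists b0. tauto.
    + intros x y -> hy. exists (RInt f 0 y). split.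
      * apply (RInt_correct (V:=R_CompleteNormedModule)). apply Hex. lra.
      * apply HP. apply (proj2 (ballR _ _ _)).
        pose proof (RInt_mono f Hpos Hex b0 y hb0 ltac:(lra)).
        pose proof (Hle y ltac:(lra)).
        rewrite Rabs_left1 by lra. lra.
  - intros B b0 hb0 HB. apply HL2. intros v [b [hb ->]].
    destruct (Rle_dec b0 b) as [h|h].
    + apply HB; lra.
    + eapply Rle_trans; [apply (RInt_mono f Hpos Hex b b0); lra | apply HB; lra].
Qed.
Lemma is_RInt_cst (a b c : R) : is_RInt (fun _ => c) a b ((b - a) * c).
Proof. exact (is_RInt_const a b c). Qed.

Lemma is_RInt_inv2 (c a b : R) : 0 < a -> a <= b ->
  is_RInt (fun y => c / y ^ 2) a b (c / a - c / b).
Proof.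
  intros ha hab.
  replace (c / a - c / b) with (minus ((fun y => - c / y) b) ((fun y => - c / y) a))
    by (unfold minus, plus, opp; simpl; field; lra).
  apply (is_RInt_derive (V := R_CompleteNormedModule)).
  - intros x hx. rewrite Rmin_left, Rmax_right in hx by lra.
    auto_derive. { lra. } field. lra.
  - intros x hx. rewrite Rmin_left, Rmax_right in hx by lra.
    apply continuity_pt_filterlim. apply continuity_pt_div.
    + apply continuity_pt_const. intros ? ?; reflexivity.
    + apply derivable_continuous_pt. apply derivable_pt_pow.
    + apply pow_nonzero; lra.
Qed.

Lemma RInt_le_is (f h : R -> R) (a b v : R) : a <= b -> ex_RInt f a b ->
  is_RInt h a b v -> (forall x, a < x < b -> f x <= h x) -> RInt f a b <= v.
Proof.
  intros hab hf hh H. apply is_RInt_le with f h a b; auto.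
  apply (RInt_correct (V := R_CompleteNormedModule)); auto.
Qed.

Lemma RInt_ge_is (f h : R -> R) (a b v : R) : a <= b -> ex_RInt f a b ->
  is_RInt h a b v -> (forall x, a < x < b -> h x <= f x) -> v <= RInt f a b.
Proof.
  intros hab hf hh H. apply is_RInt_le with h f a b; auto.
  apply (RInt_correct (V := R_CompleteNormedModule)); auto.
Qed.

Lemma ex_sub (f : R -> R) (Hex : forall b, 0 <= b -> ex_RInt f 0 b) :
  forall a b, 0 <= a -> a <= b -> ex_RInt f a b.
Proof.
  intros a b ha hab. apply (ex_RInt_Chasles_2 (V:=R_CompleteNormedModule)) with 0; [lra|].
  apply Hex; lra.
Qed.

Lemma split3 (f : R -> R) (Hex : forall b, 0 <= b -> ex_RInt f 0 b) :
  forall a b c, 0 <= a -> a <= b -> b <= c -> RInt f a c = RInt f a b + RInt f b c.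
Proof.
  intros a b c ha hab hbc.
  symmetry. apply (RInt_Chasles (V:=R_CompleteNormedModule)); apply ex_sub; auto; lra.
Qed.

Theorem mainTheorem7 (a : R) (w : R -> R) (ha : a < 1) (hw : in_D a w) :
  forall x : R, 0 < x ->
    eta a / PI <= r w /\
    r w <= Rmin (2 * (x + 1) / (PI * x) * sqrt (1 - w x)) (2 / PI).
Proof.
  intros x hx.
  destruct hw as [Hc [Hev [Hbd [H0 [Hb [Hmon [Hcvx Hd]]]]]]].
  pose proof (f_nonincr w Hcvx H0) as Hnon.
  pose proof (f_bounds w Hb H0) as Hfb.
  pose proof (f_cont w Hc) as Hfc.
  assert (Hex : forall b, 0 <= b -> ex_RInt (fI w) 0 b).
  { apply ex_RInt_f; auto. intros y hy; split; apply Hfb; auto. }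
  pose proof (eta_half a w Hcvx H0 Hb Hd) as Heta.
  assert (etapos : 0 < eta a).
  { unfold eta. apply Rinv_0_lt_compat. apply Rmult_lt_0_compat.
    - unfold Rpower. apply exp_pos.
    - apply pow_lt. pose proof (Rabs_pos a). lra. }
  assert (Hpos : forall y, 0 < y -> 0 <= fI w y) by (intros; apply Hfb; auto).
  assert (B2 : forall b, 1 <= b -> RInt (fI w) 0 b <= 2).
  { intros b hb. rewrite (split3 _ Hex 0 1 b) by lra.
    pose proof (RInt_le_is (fI w) (fun _ => 1) 0 1 _ ltac:(lra) (ex_sub _ Hex 0 1 ltac:(lra) ltac:(lra))
      (is_RInt_cst 0 1 1) ltac:(intros y hy; apply Hfb; lra)).
    pose proof (RInt_le_is (fI w) _ 1 b _ ltac:(lra) (ex_sub _ Hex 1 b ltac:(lra) ltac:(lra))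
      (is_RInt_inv2 1 1 b ltac:(lra) hb)).
    assert (RInt (fI w) 1 b <= 1 / 1 - 1 / b).
    { apply H1. intros y hy. unfold Rdiv; rewrite Rmult_1_l. apply Hfb; lra. }
    assert (0 < 1 / b) by (apply Rdiv_lt_0_compat; lra).
    lra. }
  assert (Hbnd : forall b, 0 <= b -> RInt (fI w) 0 b <= 2).
  { intros b hb. destruct (Rle_dec 1 b); [apply B2; lra|].
    eapply Rle_trans; [apply (RInt_mono _ Hpos Hex b 1); lra | apply B2; lra]. }
  destruct (improper (fI w) Hpos Hex 2 Hbnd) as [l [Hl [Hle Hub]]].
  assert (Hr : r w = / PI * l).
  { unfold r. f_equal. exact (is_RInt_gen_unique (fI w) l Hl). }
  assert (PIpos : 0 < PI) by apply PI_RGT_0.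
  assert (Hlow : eta a <= l).
  { assert (Hb1 : forall b, /2 <= b -> eta a - eta a / 4 / b <= l).
    { intros b hb. apply Rle_trans with (RInt (fI w) 0 b); [|apply Hle; lra].
      rewrite (split3 _ Hex 0 (/2) b) by lra.
      pose proof (RInt_ge_is (fI w) (fun _ => eta a) 0 (/2) _ ltac:(lra)
        (ex_sub _ Hex 0 (/2) ltac:(lra) ltac:(lra)) (is_RInt_cst 0 (/2) (eta a))) as P1.
      assert (Q1 : (/2 - 0) * eta a <= RInt (fI w) 0 (/2)).
      { apply P1. intros y hy. eapply Rle_trans; [exact Heta|]. apply Hnon; lra. }
      pose proof (RInt_ge_is (fI w) _ (/2) b _ ltac:(lra)
        (ex_sub _ Hex (/2) b ltac:(lra) ltac:(lra)) (is_RInt_inv2 (eta a / 4) (/2) b ltac:(lra) hb)) as P2.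
      assert (Q2 : eta a / 4 / / 2 - eta a / 4 / b <= RInt (fI w) (/2) b).
      { apply P2. intros y hy.
        assert (E1 : fI w (/2) = 4 * (1 - w (/2))) by (unfold fI; rewrite H0; field).
        assert (w y <= w (/2)) by (apply Hmon; lra).
        unfold fI. rewrite H0. unfold Rdiv. apply Rmult_le_compat_r.
        - left. apply Rinv_0_lt_compat. apply pow_lt. lra.
        - lra. }
      replace (eta a / 4 / / 2) with (eta a / 2) in Q2 by field. lra. }
    apply Rnot_lt_le. intros Hlt.
    assert (hl0 : eta a / 2 <= l).
    { pose proof (Hb1 (/2) ltac:(lra)). replace (eta a / 4 / / 2) with (eta a / 2) in H by field. lra. }
    set (b := eta a / (eta a - l)).
    assert (hb : 1 < b).
    { unfold b. apply Rmult_lt_reg_r with (eta a - l); [lra|].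
      unfold Rdiv. rewrite Rmult_assoc, Rinv_l by lra. lra. }
    pose proof (Hb1 b ltac:(lra)).
    assert (eta a / 4 / b = (eta a - l) / 4) by (unfold b; field; lra).
    lra. }
  set (d := 1 - w x).
  assert (hd1 : d <= x ^ 2).
  { unfold d. destruct (Hb x) as [h1 _]. pose proof (Rmax_r 0 (1 - x ^ 2)). lra. }
  assert (hd2 : d <= 1).
  { unfold d. destruct (Hb x) as [h1 _]. pose proof (Rmax_l 0 (1 - x ^ 2)). lra. }
  assert (hd0 : 0 < d).
  { apply Rnot_le_lt. intros hle.
    assert (hw1 : w x = 1) by (destruct (Hb x); unfold d in hle; lra).
    destruct (Rle_dec (/2) x) as [h|h].
    - assert (w x <= w (/2)) by (apply Hmon; lra).
      assert (w (/2) <= 1) by apply Hb.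
      unfold fI in Heta. rewrite H0 in Heta.
      replace ((1 - w (/2)) / (/2) ^ 2) with (4 * (1 - w (/2))) in Heta by field. lra.
    - pose proof (Hnon x (/2) hx ltac:(lra)).
      unfold fI in H. rewrite H0, hw1 in H. unfold Rdiv in H. rewrite Rminus_eq_0, Rmult_0_l in H.
      unfold fI in Heta. rewrite H0 in Heta. unfold Rdiv in Heta. lra. }
  set (t := sqrt d).
  assert (ht0 : 0 < t) by (apply sqrt_lt_R0; lra).
  assert (htt : t * t = d) by (apply sqrt_sqrt; lra).
  assert (htx : t <= x) by nra.
  assert (ht1 : t <= 1) by nra.
  set (u := x / t).
  assert (hux : x <= u).
  { unfold u. apply Rmult_le_reg_r with t; [lra|]. unfold Rdiv.
    rewrite Rmult_assoc, Rinv_l by lra. nra. }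
  assert (Hup : l <= 2 * t + 2 * t / x - 2 * t * t / x).
  { apply (Hub _ u); [lra|]. intros b hb.
    rewrite (split3 _ Hex 0 t b), (split3 _ Hex t x b), (split3 _ Hex x u b) by lra.
    assert (Q1 : RInt (fI w) 0 t <= (t - 0) * 1).
    { apply (RInt_le_is (fI w) (fun _ => 1) 0 t); [lra | apply ex_sub; auto; lra | apply is_RInt_cst |].
      intros y hy. apply Hfb; lra. }
    assert (Q2 : RInt (fI w) t x <= d / t - d / x).
    { apply (RInt_le_is (fI w) (fun y => d / y ^ 2) t x); [lra | apply ex_sub; auto; lra | apply is_RInt_inv2; lra |].
      intros y hy. assert (w x <= w y) by (apply Hmon; lra).
      unfold fI. rewrite H0. unfold Rdiv. apply Rmult_le_compat_r.
      - left. apply Rinv_0_lt_compat. apply pow_lt. lra.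
      - unfold d; lra. }
    assert (Q3 : RInt (fI w) x u <= (u - x) * fI w x).
    { apply (RInt_le_is (fI w) (fun _ => fI w x) x u); [lra | apply ex_sub; auto; lra | apply is_RInt_cst |].
      intros y hy. apply Hnon; lra. }
    assert (Q4 : RInt (fI w) u b <= 1 / u - 1 / b).
    { apply (RInt_le_is (fI w) (fun y => 1 / y ^ 2) u b); [lra | apply ex_sub; auto; lra | apply is_RInt_inv2; lra |].
      intros y hy. unfold Rdiv; rewrite Rmult_1_l. apply Hfb; lra. }
    assert (Ef : fI w x = d / x ^ 2) by (unfold fI, d; rewrite H0; reflexivity).
    assert (0 < 1 / b) by (apply Rdiv_lt_0_compat; lra).
    assert (Esum : (t - 0) * 1 + (d / t - d / x) + (u - x) * (d / x ^ 2) + 1 / u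
                   = 2 * t + 2 * t / x - 2 * t * t / x).
    { unfold u. rewrite <- htt. field. lra. }
    rewrite Ef in Q3. lra. }
  rewrite Hr. split.
  - unfold Rdiv. rewrite Rmult_comm. apply Rmult_le_compat_l; [left; apply Rinv_0_lt_compat; lra | lra].
  - apply Rmin_glb.
    + fold d. fold t.
      replace (2 * (x + 1) / (PI * x) * t) with (/ PI * (2 * t + 2 * t / x)) by (field; lra).
      apply Rmult_le_compat_l; [left; apply Rinv_0_lt_compat; lra|].
      assert (0 <= 2 * t * t / x) by (apply Rdiv_le_0_compat; nra).
      lra.
    + unfold Rdiv. rewrite (Rmult_comm 2). apply Rmult_le_compat_l; [left; apply Rinv_0_lt_compat; lra|].
      apply Hub with 0; [lra|]. intros b hb. apply Hbnd. lra.
Qed.
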